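(* Let $h$ be a triangle center function whose locus over the 3-periodics of $E$ is an ellipse. Let $T_0$ be the 3-periodic with vertex $(a,0)$ and $T_{\pi/2}$ the 3-periodic with vertex $(0,b)$, and assume $X_h(T_0)$ and $X_h(T_{\pi/2})$ are defined. Then $X_h(T_0)=(\pm\alpha,0)$ and $X_h(T_{\pi/2})=(0,\pm\beta)$ for some $\alpha,\beta>0$, and the locus is the ellipse $x^2/\alpha^2+y^2/\beta^2=1$.
   Context: Fix real numbers $a>b>0$ and let $E$ be the ellipse $x^2/a^2+y^2/b^2=1$ (the elliptic billiard). A 3-periodic is a non-degenerate triangle $P_1P_2P_3$ with all vertices on $E$ such that at each vertex $P_j$ the normal line to $E$ at $P_j$ bisects the interior angle of the triangle at $P_j$. Every point of $E$ is a vertex of exactly one 3-periodic. For a triangle $P_1P_2P_3$ let $s_1=|P_2P_3|$, $s_2=|P_3P_1|$, $s_3=|P_1P_2|$. A triangle center function is a function $h(x,y,z)$ that is homogeneous and bisymmetric ($h(x,y,z)=h(x,z,y)$). The associated triangle center is $X_h=\dfrac{p s_1P_1+q s_2P_2+r s_3P_3}{p s_1+q s_2+r s_3}$ with $p=h(s_1,s_2,s_3)$, $q=h(s_2,s_3,s_1)$, $r=h(s_3,s_1,s_2)$. The locus of $X_h$ is the set of points $X_h(T)$ as $T$ ranges over all 3-periodics for which $X_h(T)$ is defined. *)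

(* Defs.v *)
From Stdlib Require Import Reals Lra.
Open Scope R_scope.

Definition pt : Type := (R * R)%type.

Definition onE (a b : R) (P : pt) : Prop :=
  (fst P)^2 / a^2 + (snd P)^2 / b^2 = 1.

Definition dist (P Q : pt) : R :=
  sqrt ((fst P - fst Q)^2 + (snd P - snd Q)^2).

Definition noncollinear (P1 P2 P3 : pt) : Prop :=
  (fst P2 - fst P1) * (snd P3 - snd P1) - (snd P2 - snd P1) * (fst P3 - fst P1) <> 0.

(* The normal line to E at P (direction (x/a^2, y/b^2)) is the line of the
   internal bisector of the angle QPR, whose direction is the sum of the
   unit vectors from P towards Q and towards R. *)
Definition normal_bisects (a b : R) (P Q R' : pt) : Prop :=
  let nx := fst P / a^2 in
  let ny := snd P / b^2 in
  let wx := (fst Q - fst P) / dist P Q + (fst R' - fst P) / dist P R' in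
  let wy := (snd Q - snd P) / dist P Q + (snd R' - snd P) / dist P R' in
  nx * wy - ny * wx = 0.

Definition is3periodic (a b : R) (P1 P2 P3 : pt) : Prop :=
  noncollinear P1 P2 P3 /\
  onE a b P1 /\ onE a b P2 /\ onE a b P3 /\
  normal_bisects a b P1 P2 P3 /\
  normal_bisects a b P2 P3 P1 /\
  normal_bisects a b P3 P1 P2.

Definition has_vertex (V P1 P2 P3 : pt) : Prop := P1 = V \/ P2 = V \/ P3 = V.

Definition homogeneous (h : R -> R -> R -> option R) : Prop :=
  exists k : R, forall x y z t, 0 < x -> 0 < y -> 0 < z -> 0 < t ->
    h (t * x) (t * y) (t * z) = option_map (fun v => Rpower t k * v) (h x y z).

Definition bisymmetric (h : R -> R -> R -> option R) : Prop :=
  forall x y z, 0 < x -> 0 < y -> 0 < z -> h x y z = h x z y.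

Definition Xh (h : R -> R -> R -> option R) (P1 P2 P3 : pt) : option pt :=
  let s1 := dist P2 P3 in
  let s2 := dist P3 P1 in
  let s3 := dist P1 P2 in
  match h s1 s2 s3, h s2 s3 s1, h s3 s1 s2 with
  | Some p, Some q, Some r =>
      let d := p * s1 + q * s2 + r * s3 in
      if Req_EM_T d 0 then None
      else Some ((p * s1 * fst P1 + q * s2 * fst P2 + r * s3 * fst P3) / d,
                 (p * s1 * snd P1 + q * s2 * snd P2 + r * s3 * snd P3) / d)
  | _, _, _ => None
  end.

Definition locus (a b : R) (h : R -> R -> R -> option R) (X : pt) : Prop :=
  exists P1 P2 P3, is3periodic a b P1 P2 P3 /\ Xh h P1 P2 P3 = Some X.

Definition is_ellipse (S : pt -> Prop) : Prop :=
  exists cx cy p q r : R, 0 < p /\ 0 < p * r - q^2 /\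
    forall X : pt, S X <->
      p * (fst X - cx)^2 + 2 * q * (fst X - cx) * (snd X - cy)
        + r * (snd X - cy)^2 = 1.

(* Main.v *)
Require Import Defs.
From Stdlib Require Import Reals Lra Psatz.
Require Import Defs.
Open Scope R_scope.

Lemma dist_sq P Q : dist P Q ^2 = (fst P - fst Q)^2 + (snd P - snd Q)^2.
Proof. unfold dist. rewrite pow2_sqrt; [reflexivity|apply Rplus_le_le_0_compat; apply pow2_ge_0]. Qed.

Lemma dist_pos P Q : P <> Q -> 0 < dist P Q.
Proof. intros H. unfold dist. apply sqrt_lt_R0.
 destruct P as [x1 y1], Q as [x2 y2]; cbn [fst snd].
 destruct (Rlt_or_le 0 ((x1-x2)^2+(y1-y2)^2)) as [h|h]; auto.
 exfalso; apply H. pose proof (pow2_ge_0 (x1-x2)); pose proof (pow2_ge_0 (y1-y2)).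
 assert (A1: (x1-x2)^2 = 0) by lra. assert (A2: (y1-y2)^2 = 0) by lra.
 rewrite <- Rsqr_pow2 in A1, A2. apply Rsqr_0_uniq in A1, A2. assert (x1 = x2) by lra. assert (y1=y2) by lra. subst; reflexivity. Qed.

Lemma nc_neq P1 P2 P3 : noncollinear P1 P2 P3 -> P1 <> P2 /\ P2 <> P3 /\ P3 <> P1.
Proof. unfold noncollinear; intros H; repeat split; intro E; subst; apply H; ring. Qed.

Lemma per_cyc a b P1 P2 P3 : is3periodic a b P1 P2 P3 -> is3periodic a b P2 P3 P1.
Proof. unfold is3periodic, noncollinear; intros (H1&H2&H3&H4&H5&H6&H7); repeat split; auto.
 intro E; apply H1; rewrite <- E; ring. Qed.

Lemma Xh_cyc h P1 P2 P3 : Xh h P2 P3 P1 = Xh h P1 P2 P3.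
Proof. unfold Xh.
 destruct (h (dist P2 P3) (dist P3 P1) (dist P1 P2)) as [p|];
 destruct (h (dist P3 P1) (dist P1 P2) (dist P2 P3)) as [q|];
 destruct (h (dist P1 P2) (dist P2 P3) (dist P3 P1)) as [r|]; try reflexivity.
 cbv beta iota zeta.
 replace (q * dist P3 P1 + r * dist P1 P2 + p * dist P2 P3) with (p * dist P2 P3 + q * dist P3 P1 + r * dist P1 P2) by ring.
 destruct Req_EM_T; auto. f_equal; f_equal; f_equal; ring. Qed.

Ltac finXh HX := cbv beta iota zeta in HX;
 match type of HX with context [if ?c then _ else _] => destruct c end; try discriminate;
 injection HX; intros <-; cbn [fst snd]; unfold Rdiv; ring.

Lemma Xh_symx h u x y X : bisymmetric h -> 0 < dist (x,y) (x,-y) -> 0 < dist (x,-y) (u,0) -> 0 < dist (u,0) (x,y) ->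
  Xh h (u,0) (x,y) (x,-y) = Some X -> snd X = 0.
Proof. intros Hb H1 H2 H3 HX.
 assert (s23: dist (x,-y) (u,0) = dist (u,0) (x,y)) by (unfold dist; cbn [fst snd]; f_equal; ring).
 unfold Xh in HX. cbv zeta in HX. rewrite s23 in HX, H2.
 rewrite (Hb (dist (u,0) (x,y)) (dist (x,y) (x,-y)) (dist (u,0) (x,y))) in HX by auto.
 destruct (h (dist (x, y) (x, - y)) (dist (u, 0) (x, y)) (dist (u, 0) (x, y))); try discriminate.
 destruct (h (dist (u, 0) (x, y)) (dist (u, 0) (x, y)) (dist (x, y) (x, - y))); try discriminate.
 finXh HX. Qed.

Lemma Xh_symy h v x y X : bisymmetric h -> 0 < dist (x,y) (-x,y) -> 0 < dist (-x,y) (0,v) -> 0 < dist (0,v) (x,y) ->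
  Xh h (0,v) (x,y) (-x,y) = Some X -> fst X = 0.
Proof. intros Hb H1 H2 H3 HX.
 assert (s23: dist (-x,y) (0,v) = dist (0,v) (x,y)) by (unfold dist; cbn [fst snd]; f_equal; ring).
 unfold Xh in HX. cbv zeta in HX. rewrite s23 in HX, H2.
 rewrite (Hb (dist (0,v) (x,y)) (dist (x,y) (-x,y)) (dist (0,v) (x,y))) in HX by auto.
 destruct (h (dist (x, y) (- x, y)) (dist (0, v) (x, y)) (dist (0, v) (x, y))); try discriminate.
 destruct (h (dist (0, v) (x, y)) (dist (0, v) (x, y)) (dist (x, y) (- x, y))); try discriminate.
 finXh HX. Qed.

Lemma core a b x2 y2 x3 y3 D2 D3 : 0<a -> 0<b ->
  b^2*x2^2 + a^2*y2^2 = a^2*b^2 -> b^2*x3^2 + a^2*y3^2 = a^2*b^2 ->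
  0<D2 -> 0<D3 -> D2^2 = (a-x2)^2+y2^2 -> D3^2 = (a-x3)^2 + y3^2 ->
  y2*D3 + y3*D2 = 0 -> x3 = x2 /\ y3 = -y2.
Proof. intros Ha Hb E2 E3 HD2 HD3 F2 F3 K.
 assert (N2: a - x2 <> 0). { intro Z. assert (x2 = a) by lra. subst x2.
   assert (Z2: a^2*y2^2 = 0) by lra. apply Rmult_integral in Z2. destruct Z2 as [Z2|Z2]; [exfalso; apply (pow_nonzero a 2); lra|]. rewrite <- Rsqr_pow2 in Z2. apply Rsqr_0_uniq in Z2. subst y2. nra. }
 assert (N3: a - x3 <> 0). { intro Z. assert (x3 = a) by lra. subst x3.
   assert (Z2: a^2*y3^2 = 0) by lra. apply Rmult_integral in Z2. destruct Z2 as [Z2|Z2]; [exfalso; apply (pow_nonzero a 2); lra|]. rewrite <- Rsqr_pow2 in Z2. apply Rsqr_0_uniq in Z2. subst y3. nra. }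
 assert (e1: y2^2*D3^2 = y3^2*D2^2).
 { replace (y2^2*D3^2) with ((y2*D3)^2) by ring. replace (y2*D3) with (-(y3*D2)) by lra. ring. }
 assert (e2: y2^2*(a-x3)^2 - y3^2*(a-x2)^2 = 0).
 { replace (y2^2*(a-x3)^2 - y3^2*(a-x2)^2) with (y2^2*D3^2 - y3^2*D2^2) by (rewrite F2, F3; ring). lra. }
 assert (e3: b^2*(a-x2)*(a-x3)*(2*a)*(x2-x3) = 0).
 { replace (b^2*(a-x2)*(a-x3)*(2*a)*(x2-x3)) with ((a^2*y2^2)*(a-x3)^2 - (a^2*y3^2)*(a-x2)^2).
   replace ((a^2*y2^2)*(a-x3)^2 - (a^2*y3^2)*(a-x2)^2) with (a^2*(y2^2*(a-x3)^2 - y3^2*(a-x2)^2)) by ring.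
   rewrite e2; ring.
   replace (a^2*y2^2) with (a^2*b^2 - b^2*x2^2) by lra.
   replace (a^2*y3^2) with (a^2*b^2 - b^2*x3^2) by lra. ring. }
 assert (X: x2 - x3 = 0).
 { destruct (Rmult_integral _ _ e3) as [Z|Z]; auto. exfalso; revert Z.
   repeat apply Rmult_integral_contrapositive_currified; auto; try lra. }
 assert (x3 = x2) by lra. subst x3. split; auto.
 assert (Y: y3^2 = y2^2).
 { apply (Rmult_eq_reg_l (a^2)); [lra| apply pow_nonzero; lra]. }
 assert (DD: (D3 - D2)*(D3+D2) = 0) by (replace ((D3 - D2)*(D3+D2)) with (D3^2 - D2^2) by ring; rewrite F2, F3, Y; ring).
 apply Rmult_integral in DD. destruct DD as [DD|DD]; [|lra].
 assert (D3 = D2) by lra. subst D3.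
 assert (W: (y2+y3)*D2 = 0) by lra. apply Rmult_integral in W. destruct W; lra. Qed.
Lemma onE_poly a b x y : 0<a -> 0<b -> onE a b (x,y) -> b^2*x^2 + a^2*y^2 = a^2*b^2.
Proof. unfold onE; cbn [fst snd]; intros Ha Hb E.
 replace (b^2*x^2+a^2*y^2) with ((x^2/a^2+y^2/b^2)*(a^2*b^2)) by (field; lra).
 rewrite E; ring. Qed.

Lemma vert_x a b P2 P3 : 0<a -> 0<b -> is3periodic a b (a,0) P2 P3 -> P3 = (fst P2, - snd P2).
Proof. destruct P2 as [x2 y2], P3 as [x3 y3]; intros Ha Hb (Hnc & He1 & He2 & He3 & Hn1 & _ & _).
 destruct (nc_neq _ _ _ Hnc) as (N12 & N23 & N31).
 assert (D2p: 0 < dist (a,0) (x2,y2)) by (apply dist_pos; auto).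
 assert (D3p: 0 < dist (a,0) (x3,y3)) by (apply dist_pos; auto).
 assert (F2 := dist_sq (a,0) (x2,y2)). assert (F3 := dist_sq (a,0) (x3,y3)).
 unfold normal_bisects in Hn1; cbv zeta in Hn1; cbn [fst snd] in Hn1, F2, F3.
 set (D2 := dist (a,0) (x2,y2)) in *. set (D3 := dist (a,0) (x3,y3)) in *.
 replace (0/b^2) with 0 in Hn1 by (field; lra). rewrite Rmult_0_l, Rminus_0_r in Hn1.
 assert (K: y2*D3 + y3*D2 = 0).
 { replace (y2*D3 + y3*D2) with ((a/a^2 * ((y2-0)/D2 + (y3-0)/D3)) * (a*D2*D3)) by (field; repeat split; lra).
   rewrite Hn1; ring. }
 destruct (core a b x2 y2 x3 y3 D2 D3) as [-> ->]; auto.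
 - apply onE_poly; auto.
 - apply onE_poly; auto.
 - rewrite F2; ring.
 - rewrite F3; ring.
Qed.

Lemma vert_y a b P2 P3 : 0<a -> 0<b -> is3periodic a b (0,b) P2 P3 -> P3 = (- fst P2, snd P2).
Proof. destruct P2 as [x2 y2], P3 as [x3 y3]; intros Ha Hb (Hnc & He1 & He2 & He3 & Hn1 & _ & _).
 destruct (nc_neq _ _ _ Hnc) as (N12 & N23 & N31).
 assert (D2p: 0 < dist (0,b) (x2,y2)) by (apply dist_pos; auto).
 assert (D3p: 0 < dist (0,b) (x3,y3)) by (apply dist_pos; auto).
 assert (F2 := dist_sq (0,b) (x2,y2)). assert (F3 := dist_sq (0,b) (x3,y3)).
 unfold normal_bisects in Hn1; cbv zeta in Hn1; cbn [fst snd] in Hn1, F2, F3.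
 set (D2 := dist (0,b) (x2,y2)) in *. set (D3 := dist (0,b) (x3,y3)) in *.
 replace (0/a^2) with 0 in Hn1 by (field; lra). rewrite Rmult_0_l, Rminus_0_l in Hn1.
 assert (K: x2*D3 + x3*D2 = 0).
 { replace (x2*D3 + x3*D2) with (- (b/b^2 * ((x2-0)/D2 + (x3-0)/D3)) * (-(b*D2*D3))) by (field; repeat split; lra).
   rewrite Hn1; ring. }
 destruct (core b a y2 x2 y3 x3 D2 D3) as [-> ->]; auto.
 - apply onE_poly in He2; auto; lra.
 - apply onE_poly in He3; auto; lra.
 - rewrite F2; ring.
 - rewrite F3; ring.
Qed.

Lemma axis_x1 a b h P2 P3 X : 0<a -> 0<b -> bisymmetric h -> is3periodic a b (a,0) P2 P3 ->
  Xh h (a,0) P2 P3 = Some X -> snd X = 0.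
Proof. intros Ha Hb Hh Hp HX. pose proof (vert_x _ _ _ _ Ha Hb Hp) as E.
 destruct P2 as [x y]; subst P3. cbn [fst snd] in *.
 destruct Hp as [Hnc _]. destruct (nc_neq _ _ _ Hnc) as (N12 & N23 & N31).
 eapply Xh_symx; eauto; apply dist_pos; auto. Qed.

Lemma axis_y1 a b h P2 P3 X : 0<a -> 0<b -> bisymmetric h -> is3periodic a b (0,b) P2 P3 ->
  Xh h (0,b) P2 P3 = Some X -> fst X = 0.
Proof. intros Ha Hb Hh Hp HX. pose proof (vert_y _ _ _ _ Ha Hb Hp) as E.
 destruct P2 as [x y]; subst P3. cbn [fst snd] in *.
 destruct Hp as [Hnc _]. destruct (nc_neq _ _ _ Hnc) as (N12 & N23 & N31).
 eapply Xh_symy; eauto; apply dist_pos; auto. Qed.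

Lemma axis_x a b h P1 P2 P3 X : 0<a -> 0<b -> bisymmetric h -> is3periodic a b P1 P2 P3 ->
  has_vertex (a,0) P1 P2 P3 -> Xh h P1 P2 P3 = Some X -> snd X = 0.
Proof. intros Ha Hb Hh Hp [E|[E|E]] HX; subst.
 - eapply (axis_x1 a b); eauto.
 - rewrite <- Xh_cyc in HX. eapply (axis_x1 a b); eauto. apply per_cyc; auto.
 - rewrite <- Xh_cyc, <- Xh_cyc in HX. eapply (axis_x1 a b); eauto. do 2 apply per_cyc; auto.
Qed.

Lemma axis_y a b h P1 P2 P3 X : 0<a -> 0<b -> bisymmetric h -> is3periodic a b P1 P2 P3 ->
  has_vertex (0,b) P1 P2 P3 -> Xh h P1 P2 P3 = Some X -> fst X = 0.
Proof. intros Ha Hb Hh Hp [E|[E|E]] HX; subst.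
 - eapply (axis_y1 a b); eauto.
 - rewrite <- Xh_cyc in HX. eapply (axis_y1 a b); eauto. apply per_cyc; auto.
 - rewrite <- Xh_cyc, <- Xh_cyc in HX. eapply (axis_y1 a b); eauto. do 2 apply per_cyc; auto.
Qed.
Definition fr (sx sy : R) (P : pt) : pt := (sx * fst P, sy * snd P).

Lemma dist_fr sx sy P Q : sx*sx = 1 -> sy*sy = 1 -> dist (fr sx sy P) (fr sx sy Q) = dist P Q.
Proof. intros Hx Hy. unfold dist, fr; cbn [fst snd]. f_equal.
 replace ((sx * fst P - sx * fst Q) ^ 2) with ((sx*sx)*(fst P - fst Q)^2) by ring.
 replace ((sy * snd P - sy * snd Q) ^ 2) with ((sy*sy)*(snd P - snd Q)^2) by ring.
 rewrite Hx, Hy; ring. Qed.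

Lemma nb_fr a b sx sy P Q R' : sx*sx = 1 -> sy*sy = 1 -> normal_bisects a b P Q R' ->
  normal_bisects a b (fr sx sy P) (fr sx sy Q) (fr sx sy R').
Proof. intros Hx Hy Hn. unfold normal_bisects in *; cbv zeta in *.
 rewrite !dist_fr by auto. unfold fr; cbn [fst snd].
 set (d1 := dist P Q) in *. set (d2 := dist P R') in *.
 destruct P as [x1 y1], Q as [x2 y2], R' as [x3 y3]; cbn [fst snd] in *.
 rewrite <- (Rmult_0_r (sx*sy)), <- Hn. unfold Rdiv; ring. Qed.

Lemma per_fr a b sx sy P1 P2 P3 : sx*sx = 1 -> sy*sy = 1 -> is3periodic a b P1 P2 P3 ->
  is3periodic a b (fr sx sy P1) (fr sx sy P2) (fr sx sy P3).
Proof. intros Hx Hy (Hnc & E1 & E2 & E3 & N1 & N2 & N3).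
 repeat split; try (apply nb_fr; auto).
 - unfold noncollinear in *; unfold fr; cbn [fst snd]. intro Z. apply Hnc.
   apply (Rmult_eq_reg_l (sx*sy)); [| intro W; apply Rmult_integral in W; destruct W; subst; lra].
   rewrite Rmult_0_r, <- Z. ring.
 - unfold onE, fr in *; cbn [fst snd]. rewrite <- E1.
   replace ((sx * fst P1)^2) with ((sx*sx)*fst P1^2) by ring. replace ((sy * snd P1)^2) with ((sy*sy)*snd P1^2) by ring.
   rewrite Hx, Hy; unfold Rdiv; ring.
 - unfold onE, fr in *; cbn [fst snd]. rewrite <- E2.
   replace ((sx * fst P2)^2) with ((sx*sx)*fst P2^2) by ring. replace ((sy * snd P2)^2) with ((sy*sy)*snd P2^2) by ring.
   rewrite Hx, Hy; unfold Rdiv; ring.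
 - unfold onE, fr in *; cbn [fst snd]. rewrite <- E3.
   replace ((sx * fst P3)^2) with ((sx*sx)*fst P3^2) by ring. replace ((sy * snd P3)^2) with ((sy*sy)*snd P3^2) by ring.
   rewrite Hx, Hy; unfold Rdiv; ring.
Qed.

Lemma Xh_fr h sx sy P1 P2 P3 X : sx*sx = 1 -> sy*sy = 1 -> Xh h P1 P2 P3 = Some X ->
  Xh h (fr sx sy P1) (fr sx sy P2) (fr sx sy P3) = Some (fr sx sy X).
Proof. intros Hx Hy HX. unfold Xh in *. cbv zeta in *. rewrite !dist_fr by auto.
 destruct (h (dist P2 P3) (dist P3 P1) (dist P1 P2)); try discriminate.
 destruct (h (dist P3 P1) (dist P1 P2) (dist P2 P3)); try discriminate.
 destruct (h (dist P1 P2) (dist P2 P3) (dist P3 P1)); try discriminate.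
 cbv beta iota zeta in *.
 match type of HX with context [if ?c then _ else _] => destruct c end; try discriminate.
 injection HX; intros <-. unfold fr; cbn [fst snd]. apply f_equal; apply f_equal2; unfold Rdiv; ring. Qed.

Lemma locus_fr a b h sx sy X : sx*sx = 1 -> sy*sy = 1 -> locus a b h X -> locus a b h (sx*fst X, sy*snd X).
Proof. intros Hx Hy (P1 & P2 & P3 & Hp & HX).
 exists (fr sx sy P1), (fr sx sy P2), (fr sx sy P3). split.
 - apply per_fr; auto.
 - apply (Xh_fr h sx sy) in HX; auto. Qed.
Theorem mainTheorem5 (a b : R) (h : R -> R -> R -> option R) :
  0 < b -> b < a ->
  homogeneous h -> bisymmetric h ->
  is_ellipse (locus a b h) ->
  forall P1 P2 P3 Q1 Q2 Q3 : pt,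
    is3periodic a b P1 P2 P3 -> has_vertex (a, 0) P1 P2 P3 ->
    Xh h P1 P2 P3 <> None ->
    is3periodic a b Q1 Q2 Q3 -> has_vertex (0, b) Q1 Q2 Q3 ->
    Xh h Q1 Q2 Q3 <> None ->
    exists alpha beta : R, 0 < alpha /\ 0 < beta /\
      (Xh h P1 P2 P3 = Some (alpha, 0) \/ Xh h P1 P2 P3 = Some (- alpha, 0)) /\
      (Xh h Q1 Q2 Q3 = Some (0, beta) \/ Xh h Q1 Q2 Q3 = Some (0, - beta)) /\
      (forall X : pt, locus a b h X <->
         (fst X)^2 / alpha^2 + (snd X)^2 / beta^2 = 1).
Proof.
 intros Hb Hba Hhom Hbis [cx [cy [p [q [r [Hp [Hdet HS]]]]]]] P1 P2 P3 Q1 Q2 Q3 HP HvP HXP HQ HvQ HXQ.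
 assert (Ha : 0 < a) by lra.
 assert (m1 : (-1)*(-1) = 1) by ring. assert (m0 : 1*1 = 1) by ring.
 assert (Hsp : 0 < sqrt p) by (apply sqrt_lt_R0; auto).
 assert (Hspp := sqrt_sqrt p (Rlt_le _ _ Hp)).
 set (e := 1 / sqrt p).
 assert (He : p * e^2 = 1) by (unfold e; rewrite <- Hspp at 1; field; lra).
 assert (L1 : locus a b h (cx + e, cy)).
 { apply HS; cbn [fst snd]. replace (cx + e - cx) with e by ring. replace (cy - cy) with 0 by ring.
   rewrite <- He; ring. }
 assert (L2 : locus a b h (cx - e, cy)).
 { apply HS; cbn [fst snd]. replace (cx - e - cx) with (-e) by ring. replace (cy - cy) with 0 by ring.
   rewrite <- He; ring. }
 apply (locus_fr a b h (-1) (-1)) in L1, L2; auto.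
 apply HS in L1, L2. cbn [fst snd] in L1, L2.
 assert (Qc : p*cx^2 + 2*q*cx*cy + r*cy^2 = 0) by nra.
 assert (Cy : cy = 0).
 { assert (Z: (p*cx + q*cy)^2 + (p*r - q^2)*cy^2 = 0) by (replace ((p*cx + q*cy)^2 + (p*r - q^2)*cy^2) with (p*(p*cx^2 + 2*q*cx*cy + r*cy^2)) by ring; rewrite Qc; ring).
   pose proof (pow2_ge_0 (p*cx+q*cy)). pose proof (pow2_ge_0 cy).
   assert (Z2: (p*r-q^2)*cy^2 = 0) by nra. apply Rmult_integral in Z2. destruct Z2 as [Z2|Z2]; [lra|].
   rewrite <- Rsqr_pow2 in Z2. apply Rsqr_0_uniq in Z2. auto. }
 subst cy.
 assert (Cx : cx = 0).
 { assert (Z2: p*cx^2 = 0) by lra. apply Rmult_integral in Z2. destruct Z2 as [Z2|Z2]; [lra|].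
   rewrite <- Rsqr_pow2 in Z2. apply Rsqr_0_uniq in Z2. auto. }
 subst cx. clear L1 L2 Qc.
 assert (Hm : 0 < p + 2*q + r).
 { assert (0 < p*(p+2*q+r)). { replace (p*(p+2*q+r)) with ((p+q)^2 + (p*r-q^2)) by ring.
     pose proof (pow2_ge_0 (p+q)); lra. }
   nra. }
 assert (Hsm : 0 < sqrt (p+2*q+r)) by (apply sqrt_lt_R0; auto).
 assert (Hsmm := sqrt_sqrt _ (Rlt_le _ _ Hm)).
 set (t := 1 / sqrt (p+2*q+r)).
 assert (Ht : (p+2*q+r) * t^2 = 1) by (unfold t; rewrite <- Hsmm at 1; field; lra).
 assert (Ht2 : 0 < t^2) by (unfold t; apply pow_lt; apply Rdiv_lt_0_compat; lra).
 assert (L3 : locus a b h (t, t)).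
 { apply HS; cbn [fst snd]. rewrite <- Ht; ring. }
 apply (locus_fr a b h 1 (-1)) in L3; auto. apply HS in L3; cbn [fst snd] in L3.
 assert (Q0 : q = 0).
 { assert (Z: 4*q*t^2 = 0) by (replace (4*q*t^2) with ((p+2*q+r)*t^2 - (p*(1*t-0)^2 + 2*q*(1*t-0)*(-1*t-0) + r*(-1*t-0)^2)) by ring; lra).
   apply Rmult_integral in Z. destruct Z; lra. }
 subst q. clear L3.
 destruct (Xh h P1 P2 P3) as [X0|] eqn:EP; [|congruence].
 destruct (Xh h Q1 Q2 Q3) as [Y0|] eqn:EQ; [|congruence].
 assert (SX := axis_x a b h P1 P2 P3 X0 Ha Hb Hbis HP HvP EP).
 assert (SY := axis_y a b h Q1 Q2 Q3 Y0 Ha Hb Hbis HQ HvQ EQ).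
 assert (LX : locus a b h X0) by (exists P1, P2, P3; auto).
 assert (LY : locus a b h Y0) by (exists Q1, Q2, Q3; auto).
 apply HS in LX, LY.
 destruct X0 as [x0 y0], Y0 as [x1 y1]; cbn [fst snd] in *; subst y0 x1.
 assert (Hx0 : p * x0^2 = 1) by (rewrite <- LX; ring).
 assert (Hy1 : r * y1^2 = 1) by (rewrite <- LY; ring).
 assert (Nx : x0 <> 0) by (intro Z; subst; lra).
 assert (Ny : y1 <> 0) by (intro Z; subst; lra).
 assert (Ip : / x0^2 = p) by (rewrite <- (Rmult_1_l (/ x0^2)), <- Hx0; field; auto).
 assert (Ir : / y1^2 = r) by (rewrite <- (Rmult_1_l (/ y1^2)), <- Hy1; field; auto).
 exists (Rabs x0), (Rabs y1). repeat split.
 - apply Rabs_pos_lt; auto.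
 - apply Rabs_pos_lt; auto.
 - unfold Rabs; destruct Rcase_abs; [right|left]; try reflexivity. do 2 f_equal; ring.
 - unfold Rabs; destruct Rcase_abs; [right|left]; try reflexivity. do 2 f_equal; ring.
 - intro HL. apply HS in HL. rewrite !pow2_abs. unfold Rdiv; rewrite Ip, Ir. lra.
 - intro HL. apply HS. rewrite !pow2_abs in HL. unfold Rdiv in HL; rewrite Ip, Ir in HL. lra.
Qed.
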